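(* Let $a$ be a non-degenerate arrow environment and let $(X_t)$ be the walk on $a$ started at $0$. Let $Z^+$ and $Z^-$ be the processes on $a$ with initial values $Z^+_0=Z^-_0=1$. Then $T_{-1}<\infty$ if and only if $Z^+_n=0$ for some $n$, and $T_1<\infty$ if and only if $Z^-_n=0$ for some $n$.
   Context: Notation: $\mathbb N=\{1,2,\dots\}$, $\mathbb Z_+=\{0,1,2,\dots\}$. An arrow environment is $a\in\{0,1\}^{\mathbb Z\times\mathbb N}$. The walk on $a$ started at $x$ is the deterministic sequence with $X_0=x$ and $X_n=X_{n-1}+1$ if $a(X_{n-1},k)=1$, $X_n=X_{n-1}-1$ if $a(X_{n-1},k)=0$, where $k=\#\{j\le n-1:X_j=X_{n-1}\}$. For $m\in\mathbb Z$, $T_m=\inf\{t\ge0:X_t=m\}$. A sequence $b\in\{0,1\}^{\mathbb N}$ is non-degenerate if $b(i)\ne b(i+1)$ for infinitely many $i$; $a$ is non-degenerate if every $a(x,\cdot)$ is. For non-degenerate $b$: $U^+_b(0)=0$ and for $x\ge1$, $U^+_b(x)$ is the number of indices $i$ with $b(i)=1$ that precede the $x$-th index $j$ with $b(j)=0$; $U^-_b(x)$ is defined the same way with the roles of $0$ and $1$ exchanged. For non-degenerate $a$ and $y\in\mathbb Z_+$, the processes with initial value $y$ are $Z^+_0=y$, $Z^+_n=U^+_{a(n-1,\cdot)}(Z^+_{n-1})$ and $Z^-_0=y$, $Z^-_n=U^-_{a(1-n,\cdot)}(Z^-_{n-1})$ for $n\ge1$. *)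

(* Defs.v *)
From Stdlib Require Import ClassicalEpsilon.
From mathcomp Require Import all_boot all_order all_algebra.
Set Implicit Arguments. Unset Strict Implicit. Unset Printing Implicit Defensive.
Import GRing.Theory Num.Theory.

(* An arrow environment a : Z x N -> {0,1}; true = 1 (step right), false = 0.
   Only the values a x k with k >= 1 are relevant. *)
Definition arrow_env := int -> nat -> bool.

Fixpoint walk_path (a : arrow_env) (x : int) (n : nat) : seq int :=
  match n with
  | 0 => [:: x]
  | n'.+1 =>
      let p := walk_path a x n' in
      let y := last x p in
      let k := count (pred1 y) p in   (* k = #{j <= n' : X_j = X_{n'}} *)
      rcons p (if a y k then (y + 1)%R else (y - 1)%R)
  end.

Definition walk (a : arrow_env) (x : int) (n : nat) : int := last x (walk_path a x n).

Definition hits (a : arrow_env) (x m : int) : Prop := exists t, walk a x t = m.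

(* non-degenerate sequences b : N -> {0,1} (indices from 1) *)
Definition nondeg_seq (b : nat -> bool) : Prop :=
  forall N, exists i, (N <= i)%N /\ (1 <= i)%N /\ b i <> b i.+1.

Definition nondeg_env (a : arrow_env) : Prop := forall x, nondeg_seq (a x).

Definition cnt_before (b : nat -> bool) (v : bool) (j : nat) : nat :=
  \sum_(1 <= i < j) (b i == v).

Definition is_xth (b : nat -> bool) (v : bool) (x j : nat) : Prop :=
  (1 <= j)%N /\ b j = v /\ cnt_before b v j = x.-1.

Definition xth_index (b : nat -> bool) (v : bool) (x : nat) : nat :=
  epsilon (inhabits 0%N) (is_xth b v x).

Definition Uplus (b : nat -> bool) (x : nat) : nat :=
  if x is 0 then 0 else cnt_before b true (xth_index b false x).
Definition Uminus (b : nat -> bool) (x : nat) : nat :=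
  if x is 0 then 0 else cnt_before b false (xth_index b true x).

Fixpoint Zplus (a : arrow_env) (y : nat) (n : nat) : nat :=
  match n with
  | 0 => y
  | n'.+1 => Uplus (a (Posz n')) (Zplus a y n')
  end.
Fixpoint Zminus (a : arrow_env) (y : nat) (n : nat) : nat :=
  match n with
  | 0 => y
  | n'.+1 => Uminus (a (- Posz n')%R) (Zminus a y n')
  end.

(* Main.v *)
Require Import Defs.
From Stdlib Require Import ClassicalEpsilon.
From mathcomp Require Import all_boot all_order all_algebra.
From mathcomp Require Import zify.
Set Implicit Arguments. Unset Strict Implicit. Unset Printing Implicit Defensive.
Import GRing.Theory Num.Theory.

Section Helpers.
Local Open Scope ring_scope.

Lemma walk_pathS a x n : walk_path a x n.+1 = rcons (walk_path a x n) (walk a x n.+1).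
Proof. by rewrite /walk /= last_rcons. Qed.

Fixpoint rd (a : arrow_env) (y : int) (t : nat) : nat :=
  if t is t'.+1 then (rd a y t' + (walk a 0 t' == y))%N else 0%N.

Lemma count_rd a y t : count (pred1 y) (walk_path a 0 t) = (rd a y t + (walk a 0 t == y))%N.
Proof.
elim: t => [|t IH]; first by rewrite /= addn0.
rewrite walk_pathS -cats1 count_cat IH /=. lia.
Qed.

Lemma walk_step a t : walk a 0 t.+1 =
  if a (walk a 0 t) (rd a (walk a 0 t) t).+1 then walk a 0 t + 1 else walk a 0 t - 1.
Proof.
have -> : walk a 0 t.+1 = (let y := walk a 0 t in
   if a y (count (pred1 y) (walk_path a 0 t)) then y + 1 else y - 1).
  by rewrite /walk /= last_rcons.
by rewrite /= count_rd eqxx addn1.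
Qed.

Lemma cnt_beforeS b v j : (0 < j)%N -> cnt_before b v j.+1 = (cnt_before b v j + (b j == v))%N.
Proof. by move=> Hj; rewrite /cnt_before big_nat_recr. Qed.

Lemma cnt_before1 b v : cnt_before b v 1 = 0%N.
Proof. by rewrite /cnt_before big_geq. Qed.

Lemma cnt_before0 b v : cnt_before b v 0 = 0%N.
Proof. by rewrite /cnt_before big_geq. Qed.

Lemma cnt_step b v j : (cnt_before b v j <= cnt_before b v j.+1)%N.
Proof.
case: j => [|j]; first by rewrite cnt_before0.
by rewrite (cnt_beforeS _ _ (ltn0Sn j)) leq_addr.
Qed.

Lemma cnt_mono b v j k : (j <= k)%N -> (cnt_before b v j <= cnt_before b v k)%N.
Proof.
elim: k => [|k IH]; first by rewrite leqn0 => /eqP ->.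
rewrite leq_eqVlt => /orP [/eqP -> //|Hjk].
exact: leq_trans (IH Hjk) (cnt_step _ _ _).
Qed.

Lemma xth_uniq b v m j1 j2 : is_xth b v m j1 -> is_xth b v m j2 -> j1 = j2.
Proof.
have H : forall i1 i2, is_xth b v m i1 -> is_xth b v m i2 -> (i1 < i2)%N -> False.
  move=> i1 i2 [h1 [e1 c1]] [h2 [e2 c2]] lt.
  have := cnt_mono b v lt. rewrite cnt_beforeS // e1 eqxx c1 c2. lia.
move=> H1 H2; case: (ltngtP j1 j2) => // lt.
  by case: (H _ _ H1 H2 lt).
by case: (H _ _ H2 H1 lt).
Qed.

Definition ones a y t := cnt_before (a y) true (rd a y t).+1.
Definition zeros a y t := cnt_before (a y) false (rd a y t).+1.

Lemma onesS a y t : ones a y t.+1 = (ones a y t + ((walk a 0 t == y) && a y (rd a y t).+1))%N.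
Proof.
rewrite /ones /=; case: eqP => _ /=; last by rewrite !addn0.
by rewrite addn1 cnt_beforeS // eqb_id.
Qed.

Lemma zerosS a y t : zeros a y t.+1 = (zeros a y t + ((walk a 0 t == y) && ~~ a y (rd a y t).+1))%N.
Proof.
rewrite /zeros /=; case: eqP => _ /=; last by rewrite !addn0.
by rewrite addn1 cnt_beforeS // eqbF_neg.
Qed.

Lemma conserv a (y : int) t :
  (ones a y t + nat_of_bool (y < 0)%R)%N = (zeros a (y + 1) t + nat_of_bool (y < walk a 0 t)%R)%N.
Proof.
elim: t => [|t IH].
  by rewrite /ones /zeros /= !cnt_before1.
move: IH; rewrite onesS zerosS walk_step.
move: (walk a 0 t) => x.
case: (eqVneq x y) => [->|nxy].
  have -> : (y == y + 1) = false by apply/eqP; lia.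
  case: (a y _) => /= IH; lia.
case: (eqVneq x (y + 1)) => [->|nxy1].
  case: (a (y+1) _) => /= IH; lia.
case: (a x _) => /= IH; lia.
Qed.

Lemma last_zero a y t : walk a 0 t < y -> (0 < rd a y t)%N -> a y (rd a y t) = false.
Proof.
elim: t => [|t IH] //=.
rewrite walk_step.
case: (eqVneq (walk a 0 t) y) => [->|ne] /=.
  by rewrite addn1; case: (a y _) => //=; lia.
rewrite addn0 => h; apply: IH.
move: h; case: (a _ _); lia.
Qed.

Lemma rd_none a y t : (forall j, (j < t)%N -> walk a 0 j != y) -> rd a y t = 0%N.
Proof.
elim: t => [|t IH] //= H.
rewrite IH; last by move=> j hj; apply: H; lia.
by rewrite (negbTE (H t (ltnSn t))).
Qed.

Lemma walk_le a t : walk a 0 t <= Posz t.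
Proof.
elim: t => [|t IH] //=; rewrite walk_step; case: (a _ _); lia.
Qed.


Lemma Uplus_final b r : (r = 0%N \/ (0 < r)%N /\ b r = false) ->
  Uplus b (cnt_before b false r.+1) = cnt_before b true r.+1.
Proof.
case=> [->|[hr hb]]; first by rewrite !cnt_before1.
rewrite !cnt_beforeS // hb /= addn1 addn0 /Uplus.
set m := (cnt_before b false r).+1.
have Hx : is_xth b false m r by split => //; split.
have := epsilon_spec (inhabits 0%N) (is_xth b false m) (ex_intro _ r Hx).
move=> H; rewrite /xth_index (xth_uniq H Hx) //.
Qed.

Lemma dir1 a : hits a 0 (-1) -> exists n, Zplus a 1 n = 0%N.
Proof.
case=> T0 HT0.
have ex : exists T, walk a 0 T == -1 by exists T0; apply/eqP.
case: (ex_minnP ex) => T /eqP HT Hmin.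
have R_1 : rd a (-1) T = 0%N.
  apply: rd_none => j hj; apply/negP => /Hmin; lia.
have key : forall y : nat, zeros a (Posz y) T = Zplus a 1 y.
  elim=> [|y IH].
    have := conserv a (-1) T.
    rewrite addNr HT /ones R_1 cnt_before1 /=. rewrite addn0 add0n => h; exact: (esym h).
  have := conserv a (Posz y) T.
  rewrite HT /= => h.
  have -> : Posz y.+1 = Posz y + 1 by lia.
  have -> : zeros a (Posz y + 1) T = ones a y T by lia.
  rewrite -IH /ones /zeros Uplus_final //.
  case: (posnP (rd a y T)) => [->|hp]; [by left|right; split => //].
  apply: last_zero => //; rewrite HT; lia.
exists T.+1; rewrite -key /zeros.
rewrite (@rd_none a T.+1 T) ?cnt_before1 //.
move=> j hj; apply/eqP => e; have := walk_le a j; rewrite e; lia.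
Qed.

Lemma zero_exists b : nondeg_seq b -> forall m, (0 < m)%N -> exists j, is_xth b false m j.
Proof.
move=> Hb.
have Hf : forall N, exists i, (N <= i)%N /\ (1 <= i)%N /\ b i = false.
  move=> N; case: (Hb N) => i [h1 [h2 h3]].
  case E: (b i); last by exists i.
  exists i.+1; split; first lia; split; first lia.
  by case E2: (b i.+1) => //; rewrite E E2 in h3.
have Hu : forall m, exists j, (m <= cnt_before b false j)%N.
  elim=> [|m [j hj]]; first by exists 0%N.
  case: (Hf j) => i [h1 [h2 h3]].
  exists i.+1; rewrite cnt_beforeS // h3 eqxx.
  have := cnt_mono b false h1; lia.
move=> m hm.
case: (ex_minnP (Hu m)) => j0 hj0 hmin.
case: j0 hj0 hmin => [|j]; first by rewrite cnt_before0; lia.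
case: j => [|j]; first by rewrite cnt_before1; lia.
move=> hj hmin.
have lt : (cnt_before b false j.+1 < m)%N.
  rewrite ltnNge; apply/negP => /hmin; lia.
move: hj; rewrite cnt_beforeS //.
case E: (b j.+1) => /= h.
  lia.
exists j.+1; split => //; split => //; lia.
Qed.


Definition bnd a (y : nat) : nat :=
  if Zplus a 1 y is 0%N then 0%N else xth_index (a (Posz y)) false (Zplus a 1 y).

Lemma sum_ind (k N : nat) : (\sum_(0 <= y < N) ((Posz k == Posz y) : nat))%N = (k < N)%N.
Proof.
elim: N => [|N IH]; first by rewrite big_geq.
rewrite big_nat_recr //= IH eqz_nat.
lia.
Qed.

Lemma dir2 a : nondeg_env a -> (exists n, Zplus a 1 n = 0%N) -> hits a 0 (-1).
Proof.
move=> Ha [N HN].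
apply: NNPP => Hnh.
have Hne : forall t, walk a 0 t != -1.
  by move=> t; apply/eqP => e; apply: Hnh; exists t.
have Hge : forall t, 0 <= walk a 0 t.
  elim=> [|t IH] //; have := Hne t.+1; rewrite walk_step; case: (a _ _); lia.
have R_1 : forall t, rd a (-1) t = 0%N.
  by move=> t; apply: rd_none => j _; apply/eqP => e; have := Hge j; rewrite e.
have zeros0 : forall t, zeros a 0 t = 0%N.
  move=> t; have := conserv a (-1) t.
  have -> : (-1 : int) + 1 = Posz 0 by [].
  rewrite /ones R_1 cnt_before1.
  have -> : ((-1 : int) < walk a 0 t) = true by have := Hge t; lia.
  move=> h; apply/eqP; rewrite -(eqn_add2r 1); apply/eqP; exact: (esym h).
have Hx : forall y, (0 < Zplus a 1 y)%N -> is_xth (a (Posz y)) false (Zplus a 1 y) (bnd a y).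
  move=> y hy; rewrite /bnd; case E: (Zplus a 1 y) hy => [//|m] _.
  rewrite -E; apply: epsilon_spec; apply: zero_exists; [exact: Ha|by rewrite E].
have onesle : forall t (y : nat), (rd a y t <= bnd a y)%N -> (ones a y t <= Zplus a 1 y.+1)%N.
  move=> t y h; rewrite /ones /=.
  case E: (Zplus a 1 y) => [|m].
    have : rd a y t = 0%N by move: h; rewrite /bnd E; lia.
    by move->; rewrite cnt_before1.
  have := Hx y; rewrite E => /(_ isT) [h1 [h2 h3]].
  rewrite /Uplus.
  have := cnt_mono (a (Posz y)) true (h : ((rd a y t).+1 <= (bnd a y).+1)%N).
  rewrite (cnt_beforeS _ _ h1) h2 /= addn0 /bnd E //.
have Inv : forall t (y : nat), (rd a y t <= bnd a y)%N.
  elim=> [|t IH] y //=.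
  case: (eqVneq (walk a 0 t) (Posz y)) => [e|ne]; last by rewrite addn0.
  rewrite addn1 ltnNge; apply/negP => hle.
  have eq : rd a y t = bnd a y by apply/eqP; rewrite eqn_leq IH hle.
  case E: (Zplus a 1 y) => [|m].
    case: y e hle eq E => [|y'] e hle eq E; first by [].
    have := conserv a (Posz y') t.
    have := onesle t y' (IH y').
    rewrite E e.
    have -> : Posz y' + 1 = Posz y'.+1 by lia.
    rewrite /zeros eq /bnd E cnt_before1.
    have -> : (Posz y' < Posz y'.+1) = true by lia.
    rewrite /=; lia.
  have := Hx y; rewrite E => /(_ isT) [h1 [h2 h3]].
  have Z : zeros a (Posz y) t = m.+1.
    by rewrite /zeros eq cnt_beforeS // h2 eqxx h3 /= addn1.
  case: y e hle eq E h1 h2 h3 Z => [|y'] e hle eq E h1 h2 h3 Z.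
    by move: (zeros0 t); rewrite Z.
  have := conserv a (Posz y') t.
  have := onesle t y' (IH y').
  rewrite E e.
  have -> : Posz y' + 1 = Posz y'.+1 by lia.
  rewrite Z.
  have -> : (Posz y' < Posz y'.+1) = true by lia.
  rewrite /=; lia.
have bN : bnd a N = 0%N by rewrite /bnd HN.
have notN : forall t, walk a 0 t != Posz N.
  move=> t; apply/negP => /eqP e.
  have := Inv t.+1 N; rewrite bN /= e eqxx; lia.
have ltN : forall t, walk a 0 t < Posz N.
  elim=> [|t IH]. have := notN 0%N; have := Hge 0%N; rewrite /walk /=; lia.
  have := notN t.+1; rewrite walk_step; case: (a _ _); lia.
have Hsum : forall t, (\sum_(0 <= y < N) rd a y t)%N = t.
  elim=> [|t IH]; first by rewrite big1.
  rewrite /= big_split /= IH.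
  have := Hge t; have := ltN t.
  case: (walk a 0 t) => [k|k] //= hk _.
  rewrite sum_ind; lia.
set B := (\sum_(0 <= y < N) bnd a y)%N.
have := Hsum B.+1.
have : (\sum_(0 <= y < N) rd a y B.+1 <= B)%N.
  by apply: leq_sum => y _; apply: Inv.
lia.
Qed.


Definition refl (a : arrow_env) : arrow_env := fun x k => ~~ a (- x) k.

Lemma walk_path_refl a n : walk_path (refl a) 0 n = map -%R (walk_path a 0 n).
Proof.
elim: n => [|n IH]; first by apply: erefl.
rewrite [LHS]/= [in RHS]/= IH map_rcons; congr rcons.
rewrite -{1}oppr0 last_map count_map.
set y := last 0 (walk_path a 0 n).
have -> : count (preim -%R (pred1 (- y))) (walk_path a 0 n) = count (pred1 y) (walk_path a 0 n).
  by apply: eq_count => z /=; rewrite eqr_opp.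
rewrite /refl opprK; case: (a y _) => /=; lia.
Qed.

Lemma walk_refl a n : walk (refl a) 0 n = - walk a 0 n.
Proof. by rewrite /walk walk_path_refl -{1}oppr0 last_map. Qed.

Lemma hits_refl a : hits a 0 1 <-> hits (refl a) 0 (-1).
Proof.
split=> [[t ht]|[t ht]]; exists t.
  by rewrite walk_refl ht.
by move: ht; rewrite walk_refl => /eqP; rewrite eqr_oppLR opprK => /eqP.
Qed.

Lemma cnt_neg b v j : cnt_before (fun k => ~~ b k) v j = cnt_before b (~~ v) j.
Proof. by apply: eq_bigr => i _; case: (b i); case: v. Qed.

Lemma xth_neg b m j : is_xth (fun k => ~~ b k) false m j <-> is_xth b true m j.
Proof.
rewrite /is_xth cnt_neg /=; split=> [[h1 [h2 h3]]|[h1 [h2 h3]]]; do !split => //.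
  by move: h2; case: (b j).
by rewrite h2.
Qed.

Lemma Uminus_neg b m : nondeg_seq b -> Uminus b m = Uplus (fun k => ~~ b k) m.
Proof.
move=> Hb; case: m => [//|m] /=.
have Hb' : nondeg_seq (fun k => ~~ b k).
  move=> N; case: (Hb N) => i [h1 [h2 h3]]; exists i; do !split => //.
  by move: h3; case: (b i); case: (b i.+1).
case: (zero_exists Hb' (ltn0Sn m)) => j Hj.
have E1 := epsilon_spec (inhabits 0%N) _ (ex_intro _ j Hj).
have Hj2 : is_xth b true m.+1 j by apply/xth_neg.
have E2 := epsilon_spec (inhabits 0%N) _ (ex_intro _ j Hj2).
rewrite /xth_index.
rewrite (xth_uniq E2 Hj2) (xth_uniq E1 Hj) cnt_neg //.
Qed.

Lemma Zminus_refl a : nondeg_env a -> forall n, Zminus a 1 n = Zplus (refl a) 1 n.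
Proof.
move=> Ha; elim=> [//|n IH] /=.
by rewrite IH Uminus_neg.
Qed.

Lemma nondeg_refl a : nondeg_env a -> nondeg_env (refl a).
Proof.
move=> Ha x N; case: (Ha (- x) N) => i [h1 [h2 h3]]; exists i; do !split => //.
by rewrite /refl; move: h3; case: (a _ i); case: (a _ i.+1).
Qed.

End Helpers.

Theorem theorem2p4 (a : arrow_env) (Ha : nondeg_env a) :
  (hits a 0 (-1)%R <-> exists n, Zplus a 1 n = 0%N) /\
  (hits a 0 1%R <-> exists n, Zminus a 1 n = 0%N).
Proof.
split.
  by split; [apply: dir1 | apply: dir2].
rewrite hits_refl; split.
  by case/dir1 => n hn; exists n; rewrite Zminus_refl.
case=> n hn; apply: dir2; first exact: nondeg_refl.
by exists n; rewrite -Zminus_refl.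
Qed.
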